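(* Suppose that $\alpha>0$ is irrational and $\bm f\in\mathscr{F}$ is such that $|f_\infty|$ is bounded away from zero. Then $y_\alpha^{\bm f}$ is nowhere differentiable on $[0,1]$.
   Context: Faber--Schauder functions: $e_{0,0}(t)=\max\{0,\min\{t,1-t\}\}$, $e_{n,k}(t)=2^{-n/2}e_{0,0}(2^nt-k)$ for $n\ge1$, $k=0,\dots,2^n-1$. $\mathscr{F}$ is the class of sequences $\bm f=(f_n)_{n\ge0}$ of bounded functions $f_n:[0,1]\to\mathbb{R}$ converging uniformly to a Riemann integrable function $f_\infty$. For $t\ge0$, $t\bmod 1:=t-\lfloor t\rfloor$. For $\bm f\in\mathscr{F}$ and $\alpha>0$, $y_\alpha^{\bm f}:=\sum_{n=0}^\infty\sum_{k=0}^{2^n-1}f_n(\alpha k\bmod 1)\,e_{n,k}$. *)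

(* Defs.v *)
From Stdlib Require Import Reals Lra Lia ZArith.
From Coquelicot Require Import Coquelicot.
Open Scope R_scope.

Definition e00 (t : R) : R := Rmax 0 (Rmin t (1 - t)).

Definition e_nk (n k : nat) (t : R) : R :=
  / sqrt (2 ^ n) * e00 (2 ^ n * t - INR k).

(* t mod 1 := t - floor t   (Stdlib: frac_part t = t - IZR (Int_part t), Int_part = floor) *)
Definition mod1 (t : R) : R := frac_part t.

Definition in_classF (f : nat -> R -> R) (finf : R -> R) : Prop :=
  (forall n, exists M, forall t, 0 <= t <= 1 -> Rabs (f n t) <= M) /\
  (forall eps, 0 < eps -> exists N : nat, forall n, (N <= n)%nat ->
       forall t, 0 <= t <= 1 -> Rabs (f n t - finf t) < eps) /\
  ex_RInt finf 0 1.

Definition y_alpha (alpha : R) (f : nat -> R -> R) (t : R) : R :=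
  Series (fun n => sum_f_R0 (fun k => f n (mod1 (alpha * INR k)) * e_nk n k t)
                            (2 ^ n - 1)%nat).

Definition irrational (x : R) : Prop :=
  forall (p q : Z), q <> 0%Z -> x <> IZR p / IZR q.

(* g : [0,1] -> R is differentiable at t in [0,1] (one-sided at the endpoints):
   the difference quotient over s in [0,1], s <> t, has a finite limit. *)
Definition differentiable_at01 (g : R -> R) (t : R) : Prop :=
  exists l : R, forall eps, 0 < eps -> exists delta, 0 < delta /\
    forall s, 0 <= s <= 1 -> s <> t -> Rabs (s - t) < delta ->
      Rabs ((g s - g t) / (s - t) - l) < eps.

Definition nowhere_differentiable01 (g : R -> R) : Prop :=
  forall t, 0 <= t <= 1 -> ~ differentiable_at01 g t.

(* Main.v *)
Require Import Defs.
From Stdlib Require Import Reals Lra Lia ZArith.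
From Coquelicot Require Import Coquelicot.
Open Scope R_scope.

Lemma e00_neg x : x <= 0 -> e00 x = 0.
Proof. intros. unfold e00, Rmax, Rmin. repeat destruct Rle_dec; lra. Qed.
Lemma e00_up x : 0 <= x <= 1/2 -> e00 x = x.
Proof. intros. unfold e00, Rmax, Rmin. repeat destruct Rle_dec; lra. Qed.
Lemma e00_down x : 1/2 <= x <= 1 -> e00 x = 1 - x.
Proof. intros. unfold e00, Rmax, Rmin. repeat destruct Rle_dec; lra. Qed.
Lemma e00_big x : 1 <= x -> e00 x = 0.
Proof. intros. unfold e00, Rmax, Rmin. repeat destruct Rle_dec; lra. Qed.

Lemma e00_int z : e00 (IZR z) = 0.
Proof.
  destruct (Z_le_gt_dec z 0) as [H|H].
  - apply e00_neg. apply IZR_le in H. exact H.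
  - apply e00_big. assert (1 <= z)%Z by lia. apply IZR_le in H0. exact H0.
Qed.

Lemma e00_half z : e00 (IZR z + 1/2) = if Z.eq_dec z 0 then 1/2 else 0.
Proof.
  destruct (Z.eq_dec z 0) as [->|H].
  - rewrite e00_up; simpl; lra.
  - destruct (Z_le_gt_dec z 0) as [H1|H1].
    + apply e00_neg. assert (z <= -1)%Z by lia. apply IZR_le in H0. lra.
    + apply e00_big. assert (1 <= z)%Z by lia. apply IZR_le in H0. lra.
Qed.

Lemma e00_lin (q M : Z) : (1 <= M)%Z ->
  let w := / (2 * IZR M) in
  2 * e00 ((IZR q + 1/2) * w) - e00 (IZR q * w) - e00 ((IZR q + 1) * w) = 0.
Proof.
  intros HM w.
  assert (HM' : 1 <= IZR M) by (apply IZR_le; lia).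
  assert (Hw : 0 < w) by (unfold w; apply Rinv_0_lt_compat; lra).
  assert (Hw1 : 2 * IZR M * w = 1) by (unfold w; field; lra).
  assert (C : (q + 1 <= 0 \/ (0 <= q /\ q + 1 <= M) \/ (M <= q /\ q + 1 <= 2 * M) \/ 2 * M <= q)%Z) by lia.
  destruct C as [C|[[C1 C2]|[[C1 C2]|C]]].
  - apply IZR_le in C. rewrite plus_IZR in C.
    rewrite !e00_neg; try nra.
  - apply IZR_le in C1. apply IZR_le in C2. rewrite plus_IZR in C2.
    rewrite !e00_up; try split; try nra.
  - apply IZR_le in C1. apply IZR_le in C2. rewrite plus_IZR, mult_IZR in C2.
    rewrite !e00_down; try split; try nra.
  - apply IZR_le in C. rewrite mult_IZR in C.
    rewrite !e00_big; try nra.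
Qed.

Lemma sum_lin A B C N : sum_f_R0 (fun i => 2 * A i - B i - C i) N =
  2 * sum_f_R0 A N - sum_f_R0 B N - sum_f_R0 C N.
Proof. induction N; simpl; [ring| rewrite IHN; ring]. Qed.

Lemma sum_zero A N : (forall i, (i <= N)%nat -> A i = 0) -> sum_f_R0 A N = 0.
Proof.
  induction N; intros H; simpl. apply H; lia.
  rewrite IHN by (intros; apply H; lia). rewrite H by lia. ring.
Qed.

Lemma sum_single A N k : (k <= N)%nat ->
  (forall i, (i <= N)%nat -> i <> k -> A i = 0) -> sum_f_R0 A N = A k.
Proof.
  induction N; intros Hk H; simpl.
  - assert (k = 0%nat) by lia. subst; reflexivity.
  - destruct (Nat.eq_dec k (S N)) as [->|Hne].
    + rewrite sum_zero; [ring|]. intros; apply H; lia.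
    + rewrite IHN by (try lia; intros; apply H; lia). rewrite (H (S N)) by lia. ring.
Qed.

Lemma sum_stable a N d : (forall p, (N < p)%nat -> a p = 0) ->
  sum_f_R0 a (N + d) = sum_f_R0 a N.
Proof.
  intros H; induction d.
  - rewrite Nat.add_0_r; reflexivity.
  - rewrite Nat.add_succ_r; simpl. rewrite IHd, H by lia. ring.
Qed.

Lemma series_fin a N : (forall p, (N < p)%nat -> a p = 0) -> Series a = sum_f_R0 a N.
Proof.
  intros H. apply is_series_unique.
  change (is_lim_seq (sum_n a) (sum_f_R0 a N)).
  apply is_lim_seq_ext_loc with (u := fun _ => sum_f_R0 a N); [|apply is_lim_seq_const].
  exists N. intros n Hn. rewrite sum_n_Reals.
  replace n with (N + (n - N))%nat by lia. symmetry; apply sum_stable; auto.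
Qed.

Lemma choose_k N z : 0 <= z <= INR (S N) -> exists k, (k <= N)%nat /\ INR k <= z <= INR k + 1.
Proof.
  induction N; intros Hz.
  - exists 0%nat. simpl in *. split; [lia|lra].
  - destruct (Rle_dec z (INR (S N))).
    + destruct IHN as [k [Hk Hk2]]; [lra|]. exists k; split; [lia|auto].
    + exists (S N). split; [lia|]. rewrite S_INR with (n := S N) in Hz. lra.
Qed.

Lemma INR2 : INR 2 = 2. Proof. simpl; lra. Qed.

Lemma high_zero p n j i : (n < p)%nat -> e_nk p i (INR j / 2 ^ (S n)) = 0.
Proof.
  intros H. unfold e_nk.
  replace p with (S n + (p - S n))%nat by lia. set (s := (p - S n)%nat).
  replace (2 ^ (S n + s) * (INR j / 2 ^ S n) - INR i)
    with (IZR (Z.of_nat (2 ^ s * j) - Z.of_nat i)).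
  - rewrite e00_int. ring.
  - rewrite minus_IZR, <- !INR_IZR_INZ, mult_INR, pow_INR, INR2, pow_add.
    field. apply pow_nonzero; lra.
Qed.

Lemma lev_a n k i : e_nk n i (INR (2*k) / 2 ^ (S n)) = 0.
Proof.
  unfold e_nk.
  replace (2 ^ n * (INR (2*k) / 2 ^ S n) - INR i) with (IZR (Z.of_nat k - Z.of_nat i)).
  - rewrite e00_int. ring.
  - rewrite minus_IZR, <- !INR_IZR_INZ, mult_INR, INR2. simpl pow.
    field. apply pow_nonzero; lra.
Qed.

Lemma lev_b n k i : e_nk n i (INR (2*k+2) / 2 ^ (S n)) = 0.
Proof.
  unfold e_nk.
  replace (2 ^ n * (INR (2*k+2) / 2 ^ S n) - INR i) with (IZR (Z.of_nat k + 1 - Z.of_nat i)).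
  - rewrite e00_int. ring.
  - rewrite minus_IZR, plus_IZR, <- !INR_IZR_INZ, plus_INR, mult_INR, INR2. simpl pow.
    field. apply pow_nonzero; lra.
Qed.

Lemma lev_m n k i : e_nk n i (INR (2*k+1) / 2 ^ (S n)) =
  if Nat.eq_dec i k then / sqrt (2 ^ n) * / 2 else 0.
Proof.
  unfold e_nk.
  replace (2 ^ n * (INR (2*k+1) / 2 ^ S n) - INR i) with (IZR (Z.of_nat k - Z.of_nat i) + 1/2).
  - rewrite e00_half. destruct (Z.eq_dec _ _); destruct (Nat.eq_dec i k); try lia; unfold Rdiv; ring.
  - rewrite minus_IZR, <- !INR_IZR_INZ, plus_INR, mult_INR, INR2. simpl pow.
    rewrite INR_1. field. apply pow_nonzero; lra.
Qed.

Lemma lev_low p n k i : (p < n)%nat ->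
  2 * e_nk p i (INR (2*k+1) / 2 ^ (S n)) - e_nk p i (INR (2*k) / 2 ^ (S n))
  - e_nk p i (INR (2*k+2) / 2 ^ (S n)) = 0.
Proof.
  intros H. unfold e_nk.
  replace n with (p + S (n - S p))%nat by lia. set (r := (n - S p)%nat).
  set (M := Z.of_nat (2 ^ r)).
  set (q := (Z.of_nat k - 2 * M * Z.of_nat i)%Z).
  assert (HM : (1 <= M)%Z).
  { unfold M. assert (0 < INR (2 ^ r)) by (rewrite pow_INR, INR2; apply pow_lt; lra).
    rewrite INR_IZR_INZ in H0. apply lt_IZR in H0. lia. }
  pose proof (e00_lin q M HM) as L. simpl in L.
  assert (EM : IZR M = 2 ^ r) by (unfold M; rewrite <- INR_IZR_INZ, pow_INR, INR2; reflexivity).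
  assert (Eq : IZR q = INR k - 2 * 2 ^ r * INR i).
  { unfold q. rewrite minus_IZR, !mult_IZR, EM, <- !INR_IZR_INZ. ring. }
  assert (P : 0 < 2 ^ r) by (apply pow_lt; lra).
  assert (P2 : 0 < 2 ^ p) by (apply pow_lt; lra).
  replace (2 ^ p * (INR (2*k+1) / 2 ^ S (p + S r)) - INR i) with ((IZR q + 1/2) * / (2 * IZR M)).
  replace (2 ^ p * (INR (2*k) / 2 ^ S (p + S r)) - INR i) with (IZR q * / (2 * IZR M)).
  replace (2 ^ p * (INR (2*k+2) / 2 ^ S (p + S r)) - INR i) with ((IZR q + 1) * / (2 * IZR M)).
  - replace (2 * (/ sqrt (2 ^ p) * e00 ((IZR q + 1 / 2) * / (2 * IZR M))) -
   / sqrt (2 ^ p) * e00 (IZR q * / (2 * IZR M)) -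
   / sqrt (2 ^ p) * e00 ((IZR q + 1) * / (2 * IZR M))) with
   (/ sqrt (2 ^ p) * (2 * e00 ((IZR q + 1 / 2) * / (2 * IZR M)) -
   e00 (IZR q * / (2 * IZR M)) - e00 ((IZR q + 1) * / (2 * IZR M)))) by ring.
    rewrite L. ring.
  all: try (rewrite Eq, EM; rewrite ?plus_INR, ?mult_INR, ?INR_1, ?INR2; simpl pow; rewrite pow_add; simpl pow; field; lra).
Qed.

Definition G alpha (f : nat -> R -> R) p x :=
  sum_f_R0 (fun i => f p (mod1 (alpha * INR i)) * e_nk p i x) (2 ^ p - 1).

Lemma y_dyadic alpha f n j :
  y_alpha alpha f (INR j / 2 ^ S n) = sum_f_R0 (fun p => G alpha f p (INR j / 2 ^ S n)) n.
Proof.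
  unfold y_alpha. apply series_fin. intros p Hp.
  apply sum_zero. intros i _. rewrite high_zero by lia. ring.
Qed.

Lemma pos2n n : (0 < 2 ^ n)%nat.
Proof.
  assert (0 < INR (2 ^ n)) by (rewrite pow_INR, INR2; apply pow_lt; lra).
  apply INR_lt. simpl. exact H.
Qed.

Lemma second_diff alpha f n k : (k <= 2 ^ n - 1)%nat ->
  2 * y_alpha alpha f (INR (2*k+1) / 2 ^ S n) - y_alpha alpha f (INR (2*k) / 2 ^ S n)
  - y_alpha alpha f (INR (2*k+2) / 2 ^ S n) = f n (mod1 (alpha * INR k)) * / sqrt (2 ^ n) * / 2 * 2.
Proof.
  intros Hk. rewrite !y_dyadic, <- sum_lin.
  rewrite sum_single with (k := n); [| lia |].
  - unfold G. rewrite <- sum_lin.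
    rewrite sum_single with (k := k); [| exact Hk |].
    + rewrite lev_a, lev_b, lev_m. destruct (Nat.eq_dec k k); [ring | lia].
    + intros i _ Hi. rewrite lev_a, lev_b, lev_m. destruct (Nat.eq_dec i k); [lia | ring].
  - intros p Hp1 Hp. unfold G. rewrite <- sum_lin. apply sum_zero. intros i _.
    pose proof (lev_low p n k i ltac:(lia)) as L.
    transitivity (f p (mod1 (alpha * INR i)) *
      (2 * e_nk p i (INR (2 * k + 1) / 2 ^ S n) - e_nk p i (INR (2 * k) / 2 ^ S n) -
       e_nk p i (INR (2 * k + 2) / 2 ^ S n))); [ring|].
    rewrite L. ring.
Qed.

Lemma remainder_bound (g : R -> R) t l eps delta x :
  (forall s, 0 <= s <= 1 -> s <> t -> Rabs (s - t) < delta ->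
      Rabs ((g s - g t) / (s - t) - l) < eps) ->
  0 <= x <= 1 -> Rabs (x - t) < delta -> 0 < eps ->
  Rabs (g x - g t - l * (x - t)) <= eps * Rabs (x - t).
Proof.
  intros H Hx Hd He.
  destruct (Req_dec x t) as [->|Hne].
  - replace (g t - g t - l * (t - t)) with 0 by ring. rewrite Rminus_diag, Rabs_R0. lra.
  - replace (g x - g t - l * (x - t)) with (((g x - g t) / (x - t) - l) * (x - t))
      by (field; lra).
    rewrite Rabs_mult. apply Rmult_le_compat_r; [apply Rabs_pos|].
    left; apply H; auto.
Qed.

Theorem proposition2p7 (alpha : R) (f : nat -> R -> R) (finf : R -> R) :
  0 < alpha -> irrational alpha ->
  in_classF f finf ->
  (exists c, 0 < c /\ forall t, 0 <= t <= 1 -> c <= Rabs (finf t)) ->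
  nowhere_differentiable01 (y_alpha alpha f).
Proof.
  intros _ _ [_ [Hunif _]] [c [Hc Hfc]] t Ht [l Hl].
  destruct (Hl (c / 16)) as [delta [Hdelta Hd]]; [lra|].
  destruct (Hunif (c / 2)) as [N1 HN1]; [lra|].
  destruct (pow_lt_1_zero (1/2) ltac:(rewrite Rabs_pos_eq; lra) delta Hdelta) as [N2 HN2].
  set (n := Nat.max N1 N2).
  assert (Hsmall : / 2 ^ n < delta).
  { specialize (HN2 n ltac:(unfold n; lia)). rewrite Rabs_pos_eq in HN2.
    - rewrite <- pow_inv. replace (/ 2) with (1/2) by field. exact HN2.
    - apply pow_le; lra. }
  set (P := 2 ^ n).
  assert (HP : 0 < P) by (apply pow_lt; lra).
  assert (HP1 : 1 <= P) by (apply pow_R1_Rle; lra).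
  pose proof (pos2n n) as Hpn.
  destruct (choose_k (2 ^ n - 1) (t * P)) as [k [Hk Htk]].
  { replace (S (2 ^ n - 1)) with (2 ^ n)%nat by lia. rewrite pow_INR, INR2. fold P. nra. }
  assert (HkP : INR k + 1 <= P).
  { assert (S k <= 2 ^ n)%nat by lia. apply le_INR in H. rewrite S_INR, pow_INR, INR2 in H. exact H. }
  assert (Hk0 : 0 <= INR k) by apply pos_INR.
  set (w := / P).
  assert (Hw : 0 < w) by (unfold w; apply Rinv_0_lt_compat; lra).
  assert (HPw : P * w = 1) by (unfold w; field; lra).
  set (a := INR (2*k) / 2 ^ S n).
  set (m := INR (2*k+1) / 2 ^ S n).
  set (b := INR (2*k+2) / 2 ^ S n).
  assert (Ea : a = INR k * w) by (unfold a, w, P; rewrite mult_INR, INR2; simpl pow; field; apply pow_nonzero; lra).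
  assert (Em : m = (INR k + 1/2) * w) by (unfold m, w, P; rewrite plus_INR, mult_INR, INR2, INR_1; simpl pow; field; apply pow_nonzero; lra).
  assert (Eb : b = (INR k + 1) * w) by (unfold b, w, P; rewrite plus_INR, mult_INR, INR2; simpl pow; field; apply pow_nonzero; lra).
  assert (Hat : a <= t) by (rewrite Ea; nra).
  assert (Htb : t <= b) by (rewrite Eb; nra).
  assert (Hb1 : b <= 1) by (rewrite Eb; nra).
  assert (Ha0 : 0 <= a) by (rewrite Ea; nra).
  assert (Hab : b - a = w) by (rewrite Ea, Eb; ring).
  assert (Hw_delta : w < delta) by (unfold w, P; exact Hsmall).
  assert (Hma : a <= m <= b) by (rewrite Ea, Em, Eb; nra).
  assert (Dist : forall x, a <= x <= b -> Rabs (x - t) <= w).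
  { intros x Hx. unfold Rabs; destruct Rcase_abs; lra. }
  set (y := y_alpha alpha f).
  assert (Bd : forall x, a <= x <= b ->
      Rabs (y x - y t - l * (x - t)) <= c / 16 * w).
  { intros x Hx. eapply Rle_trans.
    - apply (remainder_bound y t l (c/16) delta x Hd); [lra| |lra].
      pose proof (Dist x Hx); lra.
    - apply Rmult_le_compat_l; [lra|]. apply Dist; auto. }
  pose proof (second_diff alpha f n k Hk) as SD. fold a m b y in SD.
  assert (E2 : 2 * m - a - b = 0). { rewrite Ea, Em, Eb. lra. }
  assert (Eq : 2 * (y m - y t - l * (m - t)) - (y a - y t - l * (a - t)) - (y b - y t - l * (b - t))
     = (2 * y m - y a - y b) - l * (2 * m - a - b)) by ring.
  rewrite E2, Rmult_0_r, Rminus_0_r, SD in Eq.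
  assert (Bnd : Rabs (f n (mod1 (alpha * INR k)) * / sqrt (2 ^ n) * / 2 * 2) <= 4 * (c / 16 * w)).
  { rewrite <- Eq.
    pose proof (Bd m Hma). pose proof (Bd a ltac:(lra)). pose proof (Bd b ltac:(lra)).
    eapply Rle_trans; [apply Rabs_triang|].
    eapply Rle_trans; [apply Rplus_le_compat_r, Rabs_triang|].
    rewrite !Rabs_Ropp, Rabs_mult, (Rabs_pos_eq 2) by lra. lra. }
  assert (Hmod : 0 <= mod1 (alpha * INR k) <= 1).
  { unfold mod1. destruct (base_fp (alpha * INR k)). lra. }
  pose proof (HN1 n ltac:(unfold n; lia) _ Hmod) as Hclose.
  pose proof (Hfc _ Hmod) as Hlow.
  set (v := f n (mod1 (alpha * INR k))) in *.
  assert (Hv : c / 2 <= Rabs v).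
  { pose proof (Rabs_triang (v) (finf (mod1 (alpha * INR k)) - v)).
    replace (v + (finf (mod1 (alpha * INR k)) - v)) with (finf (mod1 (alpha * INR k))) in H by ring.
    rewrite Rabs_minus_sym in H. lra. }
  set (s := sqrt (2 ^ n)) in *.
  assert (Hs : 0 < s) by (unfold s; apply sqrt_lt_R0; exact HP).
  assert (Hss : s * s = P) by (unfold s, P; apply sqrt_sqrt; apply pow_le; lra).
  assert (Hs1 : 1 <= s) by nra.
  replace (v * / s * / 2 * 2) with (v * / s) in Bnd by (field; lra).
  rewrite Rabs_mult, (Rabs_pos_eq (/ s)) in Bnd by (left; apply Rinv_0_lt_compat; lra).
  assert (Hw' : w = / s * / s) by (unfold w; rewrite <- Hss; field; lra).
  set (u := / s) in *.
  assert (Hsu : s * u = 1) by (unfold u; field; lra).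
  assert (Hu : 0 < u) by (unfold u; apply Rinv_0_lt_compat; lra).
  rewrite Hw' in Bnd.
  assert (Rabs v <= c / 4 * u) by nra.
  assert (u <= 1) by nra.
  nra.
Qed.
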